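(* Let $\mu\in\mathsf{Form}_{\mathcal L}$ and let $\mathcal M=(S,E,\mathrm{Val})$ be a playable $Ł_n$-model. If $\mathcal M^*=(|S|,E^*,\mathrm{Val}^* )$ is an intermediate $\mathrm{Cl}(\mu)$-filtration of $\mathcal M$, then for every $u\in S$ the restriction $E^*(|u|)^\sharp$ of $E^*(|u|)$ to $\mathcal P N\times Ł_1^{|S|}$ is a playable Boolean effectivity function.
   Context: $Ł_n=\{0,\frac1n,\dots,1\}$ with $\neg x=1-x$, $x\oplus y=\min(x+y,1)$, $x\odot y=\max(x+y-1,0)$, $x\to y=\min(1,1-x+y)$, $\wedge=\min$, $\vee=\max$, applied pointwise to functions; $Ł_1^X=\{0,1\}^X$. $N$ is a finite set of players, $|N|\ge2$, $\overline C=N\setminus C$. An $Ł_n$-valued effectivity function on a set $X$ is a map $E:\mathcal P N\times Ł_n^X\to Ł_n$ (Boolean when $n=1$). It is: outcome monotonic if $f\ge g$ implies $E(C,f)\ge E(C,g)$; $N$-maximal if $\neg E(\varnothing,\neg f)\le E(N,f)$; superadditive if $E(C_1,f)\wedge E(C_2,g)\le E(C_1\cup C_2,f\wedge g)$ whenever $C_1\cap C_2=\varnothing$; homogeneous if $E(C,f\oplus f)=E(C,f)\oplus E(C,f)$ and $E(C,f\odot f)=E(C,f)\odot E(C,f)$; has liveness if $E(C,1)=1$ for all $C$; has safety if $E(C,0)=0$ for all $C$. Playable: all six properties. Formulas of $\mathcal L$: $\phi::=1\mid p\mid\phi\to\phi\mid\neg\phi\mid[C]\phi$ ($p$ in a countably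 infinite set $\mathsf{Prop}$, $C\subseteq N$); $\mathsf{Form}_{\mathcal L}$ is the set of formulas; abbreviations $0=\neg1$, $\phi\oplus\psi=\neg\phi\to\psi$, $\phi\odot\psi=\neg(\phi\to\neg\psi)$, $\phi\wedge\psi=\phi\odot(\phi\to\psi)$. $\mathrm{Cl}(\mu)$ is the closure of the set of subformulas of $\mu$ under $\neg$ and $\to$. An $Ł_n$-model $(S,E,\mathrm{Val})$: $S\ne\varnothing$, $E(u)$ an $Ł_n$-valued effectivity function on $S$ for each $u$, $\mathrm{Val}:S\times\mathsf{Prop}\to Ł_n$ extended by the Łukasiewicz operations and $\mathrm{Val}(u,[C]\phi)=E(u)(C,\mathrm{Val}(-,\phi))$; it is playable if every $E(u)$ is playable. For $\Gamma$ a set of formulas closed under subformulas and $\phi\mapsto\phi\oplus\phi$, $\phi\mapsto\phi\odot\phi$: $u\equiv_\Gamma v$ iff $\mathrm{Val}(u,\phi)=\mathrm{Val}(v,\phi)$ for all $\phi\in\Gamma$; $|S|$ is the set of classes; $|\mathrm{Val}(-,\phi)|(|u|)=\mathrm{Val}(u,\phi)$. A $\Gamma$-filtration is an $Ł_n$-model $(|S|,E^*,\mathrm{Val}^* )$ with $\mathrm{Val}^*(|u|,p)=\mathrm{Val}(u,p)$ for $p\in\Gamma$ and $E(u)(C,\mathrm{Val}(-,\phi))=E^*(|u|)(C,|\mathrm{Val}(-,\phi)|)$ for all $C$, $\phi\in\Gamma$. It is an intermediate $\Gamma$-filtration of a playable $\mathcal M$ if moreover, for every $u$, $f\in Ł_n^{|S|}$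 and proper coalition $C\ne N$, $E^*(|u|)(C,f)=\max\{E(u)(C,\mathrm{Val}(-,\phi))\mid\phi\in\Gamma,\ |\mathrm{Val}(-,\phi)|\le f\}$, and $E^*(|u|)(N,f)=\neg E^*(|u|)(\varnothing,\neg f)$. *)

(* Defs.v *)
From mathcomp Require Import all_boot.
Set Implicit Arguments. Unset Strict Implicit. Unset Printing Implicit Defensive.

(* Ł_m = {0, 1/m, ..., 1} is encoded as 'I_m.+1 : the ordinal k stands for k/m. *)
Definition luk (m : nat) := 'I_m.+1.

Section Luk.
Variable m : nat.
Definition lzero : luk m := ord0.
Definition lone : luk m := ord_max.
Definition lneg (x : luk m) : luk m := inord (m - x).
Definition loplus (x y : luk m) : luk m := inord (minn (x + y) m).
Definition lodot (x y : luk m) : luk m := inord (x + y - m).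
Definition limp (x y : luk m) : luk m := inord (minn m (m - x + y)).
Definition lmin (x y : luk m) : luk m := if (x <= y)%N then x else y.
Definition lmax (x y : luk m) : luk m := if (x <= y)%N then y else x.
End Luk.

Definition eff (N : finType) (X : Type) (m : nat) := {set N} -> (X -> luk m) -> luk m.

Section Playable.
Variables (N : finType) (X : Type) (m : nat) (E : eff N X m).
Definition outcome_monotonic := forall C (f g : X -> luk m),
  (forall x, g x <= f x)%N -> (E C g <= E C f)%N.
Definition N_maximal := forall f : X -> luk m,
  (lneg (E set0 (fun x => lneg (f x))) <= E setT f)%N.
Definition superadditive := forall (C1 C2 : {set N}) (f g : X -> luk m),
  [disjoint C1 & C2] ->
  (lmin (E C1 f) (E C2 g) <= E (C1 :|: C2) (fun x => lmin (f x) (g x)))%N.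
Definition homogeneous := forall C (f : X -> luk m),
  E C (fun x => loplus (f x) (f x)) = loplus (E C f) (E C f) /\
  E C (fun x => lodot (f x) (f x)) = lodot (E C f) (E C f).
Definition liveness := forall C, E C (fun _ => lone m) = lone m.
Definition safety := forall C, E C (fun _ => lzero m) = lzero m.
Definition playable := outcome_monotonic /\ N_maximal /\ superadditive /\
  homogeneous /\ liveness /\ safety.
End Playable.

Inductive form (N : finType) : Type :=
| F1 : form N
| Fvar : nat -> form N
| Fimp : form N -> form N -> form N
| Fneg : form N -> form N
| Fbox : {set N} -> form N -> form N.

Arguments F1 {N}.
Arguments Fvar {N} _.
Arguments Fimp {N} _ _.
Arguments Fneg {N} _.
Arguments Fbox {N} _ _.

Inductive subform (N : finType) : form N -> form N -> Prop :=
| sub_refl phi : subform phi phi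
| sub_imp_l phi psi chi : subform phi psi -> subform phi (Fimp psi chi)
| sub_imp_r phi psi chi : subform phi chi -> subform phi (Fimp psi chi)
| sub_neg phi psi : subform phi psi -> subform phi (Fneg psi)
| sub_box phi C psi : subform phi psi -> subform phi (Fbox C psi).

Inductive inCl (N : finType) (mu : form N) : form N -> Prop :=
| cl_sub phi : subform phi mu -> inCl mu phi
| cl_neg phi : inCl mu phi -> inCl mu (Fneg phi)
| cl_imp phi psi : inCl mu phi -> inCl mu psi -> inCl mu (Fimp phi psi).

Fixpoint eval (N : finType) (S : Type) (n : nat) (E : S -> eff N S n)
  (Val : S -> nat -> luk n) (u : S) (phi : form N) {struct phi} : luk n :=
  match phi with
  | F1 => lone n
  | Fvar p => Val u p
  | Fimp a b => limp (eval E Val u a) (eval E Val u b)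
  | Fneg a => lneg (eval E Val u a)
  | Fbox C a => E u C (fun v => eval E Val v a)
  end.

Definition bool_emb (n : nat) (b : luk 1) : luk n := if b == ord0 then lzero n else lone n.

(* Q is the set of classes |S|:
   cls is surjective and cls u = cls v iff u ==_Gamma v. *)
Definition is_Cl_filtration (N : finType) (S : Type) (n : nat) (mu : form N)
  (E : S -> eff N S n) (Val : S -> nat -> luk n)
  (Q : Type) (cls : S -> Q) (Estar : Q -> eff N Q n) (Valstar : Q -> nat -> luk n) :=
  [/\ (forall q : Q, exists u, cls u = q),
      (forall u v, cls u = cls v <->
          (forall phi, inCl mu phi -> eval E Val u phi = eval E Val v phi)),
      (forall u p, inCl mu (Fvar p) -> Valstar (cls u) p = Val u p) &
      (forall u C phi, inCl mu phi -> forall g : Q -> luk n,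
          (forall v, g (cls v) = eval E Val v phi) ->
          E u C (fun v => eval E Val v phi) = Estar (cls u) C g)].

Definition is_intermediate_Cl_filtration (N : finType) (S : Type) (n : nat)
  (mu : form N) (E : S -> eff N S n) (Val : S -> nat -> luk n)
  (Q : Type) (cls : S -> Q) (Estar : Q -> eff N Q n) (Valstar : Q -> nat -> luk n) :=
  [/\ is_Cl_filtration mu E Val cls Estar Valstar,
      (forall u (f : Q -> luk n) (C : {set N}), C != setT ->
         (exists phi, [/\ inCl mu phi,
                         (forall v, eval E Val v phi <= f (cls v))%N &
                         Estar (cls u) C f = E u C (fun v => eval E Val v phi)]) /\
         (forall phi, inCl mu phi -> (forall v, eval E Val v phi <= f (cls v))%N ->
            (E u C (fun v => eval E Val v phi) <= Estar (cls u) C f)%N)) &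
      (forall u (f : Q -> luk n),
         Estar (cls u) setT f = lneg (Estar (cls u) set0 (fun q => lneg (f q))))].

(* Main.v *)
Require Import Defs.
From mathcomp Require Import all_boot.
From mathcomp Require Import zify.

Lemma val_lneg m (x : luk m) : nat_of_ord (lneg x) = m - x.
Proof. rewrite /lneg inordK //; have := ltn_ord x; lia. Qed.
Lemma val_loplus m (x y : luk m) : nat_of_ord (loplus x y) = minn (x + y) m.
Proof. rewrite /loplus inordK //; lia. Qed.
Lemma val_lodot m (x y : luk m) : nat_of_ord (lodot x y) = x + y - m.
Proof. rewrite /lodot inordK //; have := ltn_ord x; have := ltn_ord y; lia. Qed.
Lemma val_limp m (x y : luk m) : nat_of_ord (limp x y) = minn m (m - x + y).
Proof. rewrite /limp inordK //; lia. Qed.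
Lemma val_lmin m (x y : luk m) : nat_of_ord (lmin x y) = minn x y.
Proof. rewrite /lmin; case: ifP => H; lia. Qed.
Lemma val_lone m : nat_of_ord (lone m) = m. Proof. by []. Qed.
Lemma val_lzero m : nat_of_ord (lzero m) = 0. Proof. by []. Qed.
Lemma bemb_cases n (b : luk 1) :
  (nat_of_ord b = 0 /\ nat_of_ord (bool_emb n b) = 0) \/
  (nat_of_ord b = 1 /\ nat_of_ord (bool_emb n b) = n).
Proof. by case: b => [[|[|b]] Hb] //=; [left|right]. Qed.

Lemma mono_cong {N : finType} {X m} {E : eff N X m} : outcome_monotonic E ->
  forall C (f g : X -> luk m), (forall x, nat_of_ord (f x) = g x) -> E C f = E C g.
Proof.
move=> Hm C f g Hfg; apply: ord_inj; apply/eqP; rewrite eqn_leq; apply/andP.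
by split; apply: Hm => x; rewrite Hfg.
Qed.

Definition Fconj {N : finType} (a b : form N) : form N :=
  Fneg (Fimp a (Fneg (Fimp a b))).

Lemma eval_conj {N : finType} {S : Type} {n : nat} (E : S -> eff N S n)
  (Val : S -> nat -> luk n) v a b :
  nat_of_ord (eval E Val v (Fconj a b)) = minn (eval E Val v a) (eval E Val v b).
Proof.
rewrite /= val_lneg val_limp val_lneg val_limp.
have := ltn_ord (eval E Val v a); have := ltn_ord (eval E Val v b); lia.
Qed.

Lemma inCl_conj {N : finType} {mu a b : form N} :
  inCl mu a -> inCl mu b -> inCl mu (Fconj a b).
Proof. by move=> Ha Hb; apply: cl_neg; apply: cl_imp => //; apply: cl_neg; apply: cl_imp. Qed.

Theorem mainTheorem8 (n : nat) (n_gt0 : (0 < n)%N) (N : finType) (N_ge2 : (2 <= #|N|)%N)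
  (mu : form N) (S : Type) (S_ne : inhabited S)
  (E : S -> eff N S n) (Val : S -> nat -> luk n)
  (Mplay : forall u, playable (E u))
  (Q : Type) (cls : S -> Q) (Estar : Q -> eff N Q n) (Valstar : Q -> nat -> luk n)
  (Hfilt : is_intermediate_Cl_filtration mu E Val cls Estar Valstar) :
  forall u : S, exists Eb : eff N Q 1,
    (forall (C : {set N}) (f : Q -> luk 1),
        bool_emb n (Eb C f) = Estar (cls u) C (fun q => bool_emb n (f q))) /\
    playable Eb.
Proof.
move=> u.
case: Hfilt => [_ Hprop HN].
have HT0 : (set0 : {set N}) != setT.
  apply/negP => /eqP H; move: N_ge2; rewrite -cardsT -H cards0; by [].
have [Emono [_ [Esup [Ehom [Elive Esafe]]]]] := Mplay u.
have Econg := mono_cong Emono.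
have Hmono : forall C (f g : Q -> luk n), (forall q, g q <= f q) ->
    Estar (cls u) C g <= Estar (cls u) C f.
  have Hp : forall C (f g : Q -> luk n), C != setT -> (forall q, g q <= f q) ->
      Estar (cls u) C g <= Estar (cls u) C f.
    move=> C f g HC Hgf.
    have [[phi [Hphi Hle ->]] _] := Hprop u g C HC.
    have [_ Hmax] := Hprop u f C HC.
    apply: Hmax => // v; exact: leq_trans (Hle v) (Hgf _).
  move=> C f g Hgf; case: (eqVneq C setT) => [->|HC]; last exact: Hp.
  rewrite !HN !val_lneg.
  have : Estar (cls u) set0 (fun q => lneg (f q)) <= Estar (cls u) set0 (fun q => lneg (g q)).
    apply: Hp => // q; rewrite !val_lneg; have := Hgf q; lia.
  lia.
have Hcong := mono_cong (Hmono : outcome_monotonic (Estar (cls u))).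
have Hbp : forall C (f : Q -> luk n), C != setT ->
    (forall q, nat_of_ord (f q) = 0 \/ nat_of_ord (f q) = n) ->
    nat_of_ord (Estar (cls u) C f) = 0 \/ nat_of_ord (Estar (cls u) C f) = n.
  move=> C f HC Hf.
  have [[phi [Hphi Hle Heq]] Hmax] := Hprop u f C HC.
  have H2 : inCl mu (Fimp (Fneg phi) phi) by apply: cl_imp => //; apply: cl_neg.
  have Hev : forall v, nat_of_ord (eval E Val v (Fimp (Fneg phi) phi)) =
      nat_of_ord (loplus (eval E Val v phi) (eval E Val v phi)).
    move=> v; rewrite /= val_limp val_lneg val_loplus; have := ltn_ord (eval E Val v phi); lia.
  have H : minn (Estar (cls u) C f + Estar (cls u) C f) n <= Estar (cls u) C f.
    have := Hmax _ H2.
    rewrite (Econg _ _ _ Hev) (proj1 (Ehom C (fun v => eval E Val v phi))) -Heq val_loplus.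
    apply => v; rewrite Hev val_loplus; have := Hle v; have := Hf (cls v); lia.
  have := ltn_ord (Estar (cls u) C f); lia.
have Hb : forall C (f : Q -> luk n),
    (forall q, nat_of_ord (f q) = 0 \/ nat_of_ord (f q) = n) ->
    nat_of_ord (Estar (cls u) C f) = 0 \/ nat_of_ord (Estar (cls u) C f) = n.
  move=> C f Hf; case: (eqVneq C setT) => [->|HC]; last exact: Hbp.
  rewrite HN val_lneg.
  have Hn : forall q, nat_of_ord (lneg (f q)) = 0 \/ nat_of_ord (lneg (f q)) = n.
    move=> q; rewrite val_lneg; have := Hf q; lia.
  have := Hbp _ _ HT0 Hn; lia.
have Hsafe_p : forall C (f : Q -> luk n), C != setT ->
    (forall q, nat_of_ord (f q) = 0) -> nat_of_ord (Estar (cls u) C f) = 0.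
  move=> C f HC Hf; have [[phi [Hphi Hle ->]] _] := Hprop u f C HC.
  rewrite (Econg C _ (fun _ => lzero n)) ?Esafe // => v.
  have := Hle v; rewrite Hf val_lzero; lia.
have Hlive_p : forall C (f : Q -> luk n), C != setT ->
    (forall q, nat_of_ord (f q) = n) -> nat_of_ord (Estar (cls u) C f) = n.
  move=> C f HC Hf; have [_ Hmax] := Hprop u f C HC.
  have Hmm : inCl mu (Fimp mu mu) by apply: cl_imp; apply: cl_sub; constructor.
  have Hev : forall v, nat_of_ord (eval E Val v (Fimp mu mu)) = nat_of_ord (lone n).
    move=> v; rewrite /= val_limp; have := ltn_ord (eval E Val v mu); lia.
  have H : n <= Estar (cls u) C f.
    have := Hmax _ Hmm; rewrite (Econg _ _ _ Hev) Elive val_lone.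
    by apply => v; rewrite Hev Hf.
  have := ltn_ord (Estar (cls u) C f); lia.
have Hsafe : forall C (f : Q -> luk n),
    (forall q, nat_of_ord (f q) = 0) -> nat_of_ord (Estar (cls u) C f) = 0.
  move=> C f Hf; case: (eqVneq C setT) => [->|HC]; last exact: Hsafe_p.
  rewrite HN val_lneg (Hlive_p set0) //; first lia.
  by move=> q; rewrite val_lneg Hf subn0.
have Hlive : forall C (f : Q -> luk n),
    (forall q, nat_of_ord (f q) = n) -> nat_of_ord (Estar (cls u) C f) = n.
  move=> C f Hf; case: (eqVneq C setT) => [->|HC]; last exact: Hlive_p.
  rewrite HN val_lneg (Hsafe_p set0) //; first lia.
  by move=> q; rewrite val_lneg Hf subnn.
have Hdis00 : [disjoint (set0 : {set N}) & (set0 : {set N})].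
  by rewrite -setI_eq0 setI0.
have Hb1 : forall (f g : Q -> luk n),
    (forall q, nat_of_ord (f q) = 0 \/ nat_of_ord (f q) = n) ->
    (forall q, nat_of_ord (g q) = 0 \/ nat_of_ord (g q) = n) ->
    nat_of_ord (Estar (cls u) setT f) = n -> nat_of_ord (Estar (cls u) set0 g) = n ->
    nat_of_ord (Estar (cls u) setT (fun q => lmin (f q) (g q))) = n.
  move=> f g Hf Hg; rewrite !HN !val_lneg => H1 H2.
  have Hnf : nat_of_ord (Estar (cls u) set0 (fun q => lneg (f q))) = 0.
    have := ltn_ord (Estar (cls u) set0 (fun q => lneg (f q))).
    have Hn : forall q, nat_of_ord (lneg (f q)) = 0 \/ nat_of_ord (lneg (f q)) = n.
      move=> q; rewrite val_lneg; have := Hf q; lia.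
    have := Hb set0 _ Hn; lia.
  have Hn : forall q, nat_of_ord (lneg (lmin (f q) (g q))) = 0 \/
                      nat_of_ord (lneg (lmin (f q) (g q))) = n.
    move=> q; rewrite val_lneg val_lmin; have := Hf q; have := Hg q; lia.
  case: (Hb set0 _ Hn) => [->|Hc]; first lia.
  exfalso.
  have [[chi [Hchi Hlec Hc']] _] := Hprop u (fun q => lneg (lmin (f q) (g q))) set0 HT0.
  have [[psi [Hpsi Hlep Hp']] _] := Hprop u g set0 HT0.
  have [_ Hmax] := Hprop u (fun q => lneg (f q)) set0 HT0.
  have H : lmin (E u set0 (fun v => eval E Val v chi)) (E u set0 (fun v => eval E Val v psi))
      <= E u set0 (fun v => lmin (eval E Val v chi) (eval E Val v psi)).
    by have := Esup set0 set0 (fun v => eval E Val v chi) (fun v => eval E Val v psi) Hdis00;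
       rewrite setU0.
  have Hev : forall v, nat_of_ord (eval E Val v (Fconj chi psi)) =
      nat_of_ord (lmin (eval E Val v chi) (eval E Val v psi)).
    by move=> v; rewrite eval_conj val_lmin.
  rewrite -(Econg _ _ _ Hev) val_lmin -Hc' -Hp' Hc H2 minnn in H.
  have H' := Hmax _ (inCl_conj Hchi Hpsi).
  have : E u set0 (fun v => eval E Val v (Fconj chi psi)) <=
         Estar (cls u) set0 (fun q => lneg (f q)).
    apply: H' => v; rewrite eval_conj val_lneg.
    have := Hlec v; have := Hlep v; have := Hf (cls v); have := Hg (cls v).
    rewrite val_lneg val_lmin; lia.
  rewrite Hnf; lia.
have Hsup : forall (C1 C2 : {set N}) (f g : Q -> luk n), [disjoint C1 & C2] ->
    (forall q, nat_of_ord (f q) = 0 \/ nat_of_ord (f q) = n) ->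
    (forall q, nat_of_ord (g q) = 0 \/ nat_of_ord (g q) = n) ->
    nat_of_ord (Estar (cls u) C1 f) = n -> nat_of_ord (Estar (cls u) C2 g) = n ->
    nat_of_ord (Estar (cls u) (C1 :|: C2) (fun q => lmin (f q) (g q))) = n.
  move=> C1 C2 f g Hd Hf Hg H1 H2.
  case: (eqVneq (C1 :|: C2) setT) => [HU|HU].
  - case: (eqVneq C1 setT) => [HC1|HC1].
      have HC2 : C2 = set0 by move: Hd; rewrite HC1 -setI_eq0 setTI => /eqP.
      rewrite HU; apply: Hb1 => //; [by rewrite -HC1 | by rewrite -HC2].
    case: (eqVneq C2 setT) => [HC2|HC2].
      have HC1' : C1 = set0 by move: Hd; rewrite HC2 -setI_eq0 setIT => /eqP.
      rewrite HU (Hcong _ _ (fun q => lmin (g q) (f q))); last first.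
        by move=> q; rewrite !val_lmin minnC.
      apply: Hb1 => //; [by rewrite -HC2 | by rewrite -HC1'].
    rewrite HU HN val_lneg.
    have Hn : forall q, nat_of_ord (lneg (lmin (f q) (g q))) = 0 \/
                        nat_of_ord (lneg (lmin (f q) (g q))) = n.
      move=> q; rewrite val_lneg val_lmin; have := Hf q; have := Hg q; lia.
    case: (Hb set0 _ Hn) => [->|Hc]; first lia.
    exfalso.
    have [[chi [Hchi Hlec Hc']] _] := Hprop u (fun q => lneg (lmin (f q) (g q))) set0 HT0.
    have [[phi [Hphi Hlef Hf']] _] := Hprop u f C1 HC1.
    have [[psi [Hpsi Hleg Hg']] _] := Hprop u g C2 HC2.
    have Ha : lmin (E u C1 (fun v => eval E Val v phi)) (E u set0 (fun v => eval E Val v chi))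
        <= E u C1 (fun v => lmin (eval E Val v phi) (eval E Val v chi)).
      have : [disjoint C1 & set0] by rewrite -setI_eq0 setI0.
      by move=> Hd'; have := Esup _ _ (fun v => eval E Val v phi) (fun v => eval E Val v chi) Hd';
        rewrite setU0.
    have Hb' := Esup _ _ (fun v => lmin (eval E Val v phi) (eval E Val v chi))
                    (fun v => eval E Val v psi) Hd.
    rewrite HU in Hb'.
    have Hz : E u setT (fun x => lmin (lmin (eval E Val x phi) (eval E Val x chi)) (eval E Val x psi))
          <= E u setT (fun _ => lzero n).
      apply: Emono => v; rewrite !val_lmin val_lzero.
      have := Hlef v; have := Hleg v; have := Hlec v; have := Hf (cls v); have := Hg (cls v).
      rewrite val_lneg val_lmin; lia.
    rewrite Esafe val_lzero in Hz.
    move: Ha Hb' Hz; rewrite !val_lmin -Hf' -Hc' -Hg' H1 H2 Hc minnn.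
    move=> Ha Hb' Hz.
    have : n <= E u setT (fun x => lmin (lmin (eval E Val x phi) (eval E Val x chi)) (eval E Val x psi)).
      apply: leq_trans Hb'; move: Ha; lia.
    lia.
  - have HC1 : C1 != setT by apply: contra_neq HU => ->; rewrite setTU.
    have HC2 : C2 != setT by apply: contra_neq HU => ->; rewrite setUT.
    have [[phi [Hphi Hlef Hf']] _] := Hprop u f C1 HC1.
    have [[psi [Hpsi Hleg Hg']] _] := Hprop u g C2 HC2.
    have [_ Hmax] := Hprop u (fun q => lmin (f q) (g q)) (C1 :|: C2) HU.
    have Hs := Esup _ _ (fun v => eval E Val v phi) (fun v => eval E Val v psi) Hd.
    have Hev : forall v, nat_of_ord (eval E Val v (Fconj phi psi)) =
        nat_of_ord (lmin (eval E Val v phi) (eval E Val v psi)).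
      by move=> v; rewrite eval_conj val_lmin.
    have Hs' : lmin (E u C1 (fun v => eval E Val v phi)) (E u C2 (fun v => eval E Val v psi))
        <= E u (C1 :|: C2) (fun v => eval E Val v (Fconj phi psi)).
      by rewrite (Econg _ _ _ Hev).
    have Hm : E u (C1 :|: C2) (fun v => eval E Val v (Fconj phi psi)) <=
              Estar (cls u) (C1 :|: C2) (fun q => lmin (f q) (g q)).
      apply: Hmax; first exact: inCl_conj.
      move=> v; rewrite eval_conj val_lmin; have := Hlef v; have := Hleg v; lia.
    move: Hs'; rewrite val_lmin -Hf' -Hg' H1 H2 minnn => Hs'.
    have := ltn_ord (Estar (cls u) (C1 :|: C2) (fun q => lmin (f q) (g q))).
    have := leq_trans Hs' Hm; lia.
pose B (C : {set N}) (f : Q -> luk 1) := Estar (cls u) C (fun q => bool_emb n (f q)).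
have HbB : forall C f, nat_of_ord (B C f) = 0 \/ nat_of_ord (B C f) = n.
  move=> C f; apply: Hb => q; have := bemb_cases n (f q); lia.
pose Eb : eff N Q 1 := fun C f => if nat_of_ord (B C f) == 0 then lzero 1 else lone 1.
have EbV : forall C f, (nat_of_ord (B C f) = 0 /\ nat_of_ord (Eb C f) = 0) \/
                       (nat_of_ord (B C f) = n /\ nat_of_ord (Eb C f) = 1).
  move=> C f; rewrite /Eb; case: eqP => H; [left | right]; split => //.
  have := HbB C f; lia.
have HEbc : forall C (f g : Q -> luk 1), (forall q, nat_of_ord (f q) = g q) -> Eb C f = Eb C g.
  move=> C f g H; rewrite /Eb /B (Hcong _ _ (fun q => bool_emb n (g q))) //.
  by move=> q; rewrite (ord_inj (H q)).
exists Eb; split.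
  move=> C f; apply: ord_inj; change (nat_of_ord (bool_emb n (Eb C f)) = B C f).
  have := EbV C f; have := bemb_cases n (Eb C f); lia.
have EbM : outcome_monotonic Eb.
  move=> C f g Hfg; have := EbV C f; have := EbV C g.
  have : B C g <= B C f.
    apply: Hmono => q; have := Hfg q; have := bemb_cases n (f q); have := bemb_cases n (g q); lia.
  lia.
split; first exact: EbM.
split.
  move=> f; rewrite val_lneg.
  have HBT : nat_of_ord (B setT f) = n - B set0 (fun x => lneg (f x)).
    rewrite /B HN val_lneg; congr (n - nat_of_ord _); apply: Hcong => q.
    rewrite val_lneg; have := bemb_cases n (f q); have := bemb_cases n (lneg (f q)).
    rewrite !val_lneg; lia.
  have := EbV setT f; have := EbV set0 (fun x => lneg (f x)); have := HbB set0 (fun x => lneg (f x)).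
  lia.
split.
  move=> C1 C2 f g Hd; rewrite val_lmin.
  have := EbV (C1 :|: C2) (fun x => lmin (f x) (g x)).
  case: (EbV C1 f) => [[_ ->]|[H1 ->]]; first lia.
  case: (EbV C2 g) => [[_ ->]|[H2 ->]]; first lia.
  have : nat_of_ord (B (C1 :|: C2) (fun x => lmin (f x) (g x))) = n.
    rewrite /B (Hcong _ _ (fun q => lmin (bool_emb n (f q)) (bool_emb n (g q)))).
      apply: Hsup => //.
        by move=> q; have := bemb_cases n (f q); lia.
      by move=> q; have := bemb_cases n (g q); lia.
    move=> q; rewrite !val_lmin; have := bemb_cases n (f q); have := bemb_cases n (g q).
    have := bemb_cases n (lmin (f q) (g q)); rewrite val_lmin; lia.
  lia.
split.
  move=> C f; split.
    rewrite (HEbc C _ f); last by move=> q; rewrite val_loplus; have := ltn_ord (f q); lia.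
    by apply: ord_inj; rewrite val_loplus; have := ltn_ord (Eb C f); lia.
  rewrite (HEbc C _ f); last by move=> q; rewrite val_lodot; have := ltn_ord (f q); lia.
  by apply: ord_inj; rewrite val_lodot; have := ltn_ord (Eb C f); lia.
split.
  move=> C; apply: ord_inj; have := EbV C (fun _ => lone 1).
  have : nat_of_ord (B C (fun _ => lone 1)) = n by apply: Hlive.
  rewrite val_lone; lia.
move=> C; apply: ord_inj; have := EbV C (fun _ => lzero 1).
have : nat_of_ord (B C (fun _ => lzero 1)) = 0 by apply: Hsafe.
rewrite val_lzero; lia.
Qed.
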